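(* For each alphabet $A$ and each weight $\mathbf a$, the metric tree $\mathbb{T}^{A,\mathbf a}$ is geodesic.
   Context: An alphabet is $A=\mathbb N$ or $A=\{1,\dots,M\}$ with $M\ge2$. $A^k$: words of length $k$ ($A^0=\{\varepsilon\}$), $A^*=\bigcup_kA^k$, $A^{\mathbb N}$: infinite words; for $u\in A^*$, $A^n_u$ and $A^{\mathbb N}_u$ are the words of length $n$, resp. infinite words, beginning with $u$; $w(n)$ is the length-$n$ prefix; $i^{(k)}$ is $k$ copies of $i$. Graphs $G^A_k=(A^k,E^A_k)$: $E^A_1=\{\{1,i\}:i\in A\setminus\{1\}\}$, $E^A_{k+1}=\{\{12^{(k)},i1^{(k)}\}:i\in A\setminus\{1\}\}\cup\{\{iw,iu\}:i\in A,\{w,u\}\in E^A_k\}$. $A^{\mathbb N}_{u_1}\wedge A^{\mathbb N}_{u_2}$ is the set of $w\in A^{\mathbb N}_{u_1}$ such that for every $n>\max\{|u_1|,|u_2|\}$ there is $u\in A^n_{u_2}$ with $\{w(n),u\}\in E^A_n$, together with the symmetric set with $u_1,u_2$ swapped. A chain joining $w,w'\in A^{\mathbb N}$ is a list $A^{\mathbb N}_{v_1},\dots,A^{\mathbb N}_{v_N}$ with $w\in A^{\mathbb N}_{v_1}$, $w'\in A^{\mathbb N}_{v_N}$ and $A^{\mathbb N}_{v_i}\wedge A^{\mathbb N}_{v_{i+1}}\ne\emptyset$. A weight is a non-increasing $\mathbf a:\mathbb N\to(0,1/2]$ with $\mathbf a(1)=\mathbf a(2)=1/2$, $\lim\mathbf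 a(i)=0$; $\Delta_{\mathbf a}(\varepsilon)=1$, $\Delta_{\mathbf a}(i_1\cdots i_k)=\prod\mathbf a(i_j)$. $\rho_{A,\mathbf a}(w,u)=\inf\sum_{i=1}^N\Delta_{\mathbf a}(v_i)$ over chains joining $w$ and $u$; $\mathbb{T}^{A,\mathbf a}$ is the quotient of $A^{\mathbb N}$ by $\rho_{A,\mathbf a}(w,u)=0$ with metric $d_{A,\mathbf a}([w],[u])=\rho_{A,\mathbf a}(w,u)$. Geodesic: any two points $x,y$ are joined by a curve isometric to an interval of length $d(x,y)$. *)

(* Defs.v *)
From HB Require Import structures.
From mathcomp Require Import all_boot all_order all_algebra.
From mathcomp Require Import all_classical all_reals all_analysis.
Set Implicit Arguments. Unset Strict Implicit. Unset Printing Implicit Defensive.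
Import Order.TTheory GRing.Theory Num.Theory.
Local Open Scope ring_scope.
Local Open Scope classical_set_scope.

(* Alphabet: [M = None] means A = N = {1,2,3,...};
   [M = Some m] means A = {1,...,m} (with m >= 2 assumed in the theorem). *)
Definition inA (M : option nat) (i : nat) : Prop :=
  (1 <= i)%N /\ (match M with None => True | Some m => (i <= m)%N end).

Definition word (M : option nat) (u : seq nat) : Prop :=
  forall x, x \in u -> inA M x.

(* infinite words over A (indexed from 0) *)
Definition infword (M : option nat) (w : nat -> nat) : Prop :=
  forall n, inA M (w n).

Definition prefix (w : nat -> nat) (n : nat) : seq nat := mkseq w n.

Definition cyl (M : option nat) (u : seq nat) (w : nat -> nat) : Prop :=
  infword M w /\ prefix w (size u) = u.

(* Edge sets E^A_k of the graphs G^A_k (both orientations of each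
   unordered edge are listed). *)
Inductive edgeE (M : option nat) : nat -> seq nat -> seq nat -> Prop :=
  | E1l i : inA M i -> i <> 1%N -> edgeE M 1 [:: 1%N] [:: i]
  | E1r i : inA M i -> i <> 1%N -> edgeE M 1 [:: i] [:: 1%N]
  | ESl k i : inA M i -> i <> 1%N ->
      edgeE M k.+1 (1%N :: nseq k 2%N) (i :: nseq k 1%N)
  | ESr k i : inA M i -> i <> 1%N ->
      edgeE M k.+1 (i :: nseq k 1%N) (1%N :: nseq k 2%N)
  | Ecat k i w u : inA M i -> edgeE M k w u -> edgeE M k.+1 (i :: w) (i :: u).

Definition wedge_half (M : option nat) (u1 u2 : seq nat) (w : nat -> nat) : Prop :=
  cyl M u1 w /\
  forall n, (maxn (size u1) (size u2) < n)%N ->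
    exists u : seq nat, size u = n /\ word M u /\ take (size u2) u = u2 /\
      edgeE M n (prefix w n) u.

Definition wedge (M : option nat) (u1 u2 : seq nat) : set (nat -> nat) :=
  [set w | wedge_half M u1 u2 w \/ wedge_half M u2 u1 w].

Definition chain (M : option nat) (vs : seq (seq nat)) (w w' : nat -> nat) : Prop :=
  vs <> [::] /\ (forall v, v \in vs -> word M v) /\
  cyl M (head [::] vs) w /\ cyl M (last [::] vs) w' /\
  forall i, (i.+1 < size vs)%N ->
    wedge M (nth [::] vs i) (nth [::] vs i.+1) !=set0.

Definition is_weight (R : realType) (a : nat -> R) : Prop :=
  (forall i, (1 <= i)%N -> 0 < a i <= 1/2) /\
  (forall i j, (1 <= i)%N -> (i <= j)%N -> a j <= a i) /\
  a 1%N = 1/2 /\ a 2%N = 1/2 /\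
  (a n @[n --> \oo] --> (0 : R^o)).

Definition Delta (R : realType) (a : nat -> R) (v : seq nat) : R :=
  \prod_(x <- v) a x.

Definition rho (R : realType) (M : option nat) (a : nat -> R) (w u : nat -> nat) : R :=
  inf [set s | exists vs, chain M vs w u /\ s = \sum_(v <- vs) Delta a v].

(* Main.v *)
Require Import Defs.
From HB Require Import structures.
From mathcomp Require Import all_boot all_order all_algebra.
From mathcomp Require Import all_classical all_reals all_analysis.
From mathcomp Require Import lra zify ring.
Set Implicit Arguments. Unset Strict Implicit. Unset Printing Implicit Defensive.
Import Order.TTheory GRing.Theory Num.Theory.
Local Open Scope ring_scope.

Module PartA.
Import Order.TTheory GRing.Theory Num.Theory.
Local Open Scope ring_scope.

Section Gen.
Variable R : realType.

Definition ep (n : nat) : R := (2^-1) ^+ n.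

Lemma ep_ge0 n : 0 <= ep n.
Proof. by rewrite /ep exprn_ge0 // invr_ge0. Qed.

Lemma ep_gt0 n : 0 < ep n.
Proof. by rewrite /ep exprn_gt0 // invr_gt0. Qed.

Lemma epS n : ep n.+1 = ep n / 2.
Proof. by rewrite /ep exprSr. Qed.

Lemma ep0 : ep 0 = 1.
Proof. by rewrite /ep expr0. Qed.

Lemma ep_le1 n : ep n <= 1.
Proof. elim: n => [|n IH]; first by rewrite ep0. rewrite epS; have := ep_ge0 n; lra. Qed.

Lemma ep_inv n : ep n <= (n.+1%:R)^-1.
Proof.
have H2 : forall m : nat, (m.+1%:R : R) <= 2 ^+ m.
  elim=> [|m IH]; first by rewrite expr0.
  rewrite exprS -[(m.+2)%:R]natr1.
  have : (1 : R) <= 2 ^+ m by rewrite exprn_ege1 // ler1n.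
  lra.
rewrite /ep exprVn; rewrite lef_pV2 ?posrE ?exprn_gt0 //.
Qed.

Lemma ep_small (e : R) : 0 < e -> exists n, ep n < e.
Proof.
move=> e0; have [k Hk] := ltr_add_invr e0.
exists k; apply: le_lt_trans (ep_inv k) _; rewrite add0r in Hk; exact: Hk.
Qed.

Lemma approx_le (p q C : R) : (forall n, p <= q + C * ep n) -> p <= q.
Proof.
move=> H; apply/ler_addgt0Pr => e e0.
have [C0|C0] := lerP C 0.
  by have := H 0%N; rewrite ep0; lra.
have [n Hn] := @ep_small (e / C) (divr_gt0 e0 C0).
have := H n; have : C * ep n <= e.
  by rewrite mulrC -ler_pdivlMr // ltW.
lra.
Qed.

Lemma approx_eq (p q C : R) : (forall n, `|p - q| <= C * ep n) -> p = q.
Proof.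
move=> H; apply/eqP; rewrite eq_le; apply/andP; split.
  apply: (@approx_le _ _ C) => n; have := H n; rewrite ler_norml; lra.
apply: (@approx_le _ _ C) => n; have := H n; rewrite ler_norml; lra.
Qed.

(* limit of a 1/2^n-Cauchy sequence *)
Definition alim (f : nat -> R) : R := sup (range (fun n => f n - 2 * ep n)).

Lemma alim_spec (f : nat -> R) :
  (forall n, `|f n.+1 - f n| <= ep n) -> forall n, `|alim f - f n| <= 2 * ep n.
Proof.
move=> Hf.
have Hm : forall n k, `|f (n + k)%N - f n| <= 2 * ep n - 2 * ep (n + k)%N.
  move=> n; elim=> [|k IH]; first by rewrite addn0 subrr normr0 subrr.
  rewrite addnS; have := Hf (n + k)%N; rewrite epS.
  move: IH; rewrite !ler_norml; lra.
have ub : forall m n, f m - 2 * ep m <= f n + 2 * ep n.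
  move=> m n; have [le|le] := leqP n m.
    have := Hm n (m - n)%N; rewrite subnKC //; have := ep_ge0 m.
    rewrite ler_norml; lra.
  have := Hm m (n - m)%N; rewrite subnKC ?(ltnW le) //; have := ep_ge0 n.
  rewrite ler_norml; lra.
have hs : has_sup (range (fun n => f n - 2 * ep n)).
  split; first by exists (f 0%N - 2 * ep 0); exists 0%N.
  exists (f 0%N + 2 * ep 0) => _ [m _ <-]; exact: ub.
move=> n; rewrite ler_norml; apply/andP; split.
  have : f n - 2 * ep n <= alim f.
    by apply: (ub_le_sup (proj2 hs)); exists n.
  lra.
have : alim f <= f n + 2 * ep n.
  by apply: ge_sup; [exists (f n - 2 * ep n); exists n|move=> _ [m _ <-]; exact: ub].
lra.
Qed.

Definition mn (s t : R) := if s <= t then s else t.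

End Gen.

End PartA.
Import PartA.

Module PartB.
Import Order.TTheory GRing.Theory Num.Theory.
Local Open Scope ring_scope.
Local Open Scope classical_set_scope.

Notation pref := Defs.prefix.
Definition cons_w (c : nat) (x : nat -> nat) : nat -> nat :=
  fun k => if k is k'.+1 then x k' else c.
Definition sh (x : nat -> nat) : nat -> nat := fun k => x k.+1.
Definition cst (c : nat) : nat -> nat := fun _ => c.
Definition app_w (p : seq nat) (x : nat -> nat) := foldr cons_w x p.

Lemma cons_sh x : cons_w (x 0%N) (sh x) = x.
Proof. by apply: funext => -[]. Qed.

Lemma cst_cons c : cons_w c (cst c) = cst c.
Proof. by apply: funext => -[]. Qed.

Lemma size_prefix x n : size (pref x n) = n.
Proof. exact: size_mkseq. Qed.

Lemma prefix_cons c x n : pref (cons_w c x) n.+1 = c :: pref x n.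
Proof.
apply: (@eq_from_nth _ 0%N); first by rewrite size_prefix -[RHS]/((size (pref x n)).+1) size_prefix.
move=> i; rewrite size_prefix => Hi; rewrite /Defs.prefix nth_mkseq //.
by case: i Hi => [|i] Hi //=; rewrite nth_mkseq.
Qed.

Lemma take_prefix x k n : (k <= n)%N -> take k (pref x n) = pref x k.
Proof.
move=> kn; apply: (@eq_from_nth _ 0%N).
  by rewrite size_take_min !size_prefix; lia.
move=> i; rewrite size_take_min size_prefix => Hi.
have Hik : (i < k)%N by lia.
rewrite nth_take // !nth_mkseq //; lia.
Qed.

Lemma prefix_app p x n : pref (app_w p x) (size p + n) = p ++ pref x n.
Proof. by elim: p => [|c p IH] //=; rewrite prefix_cons IH. Qed.

Lemma prefix_cst c n : pref (cst c) n = nseq n c.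
Proof. by elim: n => [|n IH] //; rewrite -cst_cons prefix_cons IH. Qed.

Lemma prefix0 x : pref x 0 = [::].
Proof. by []. Qed.

Section Words.
Variable M : option nat.

Lemma word_cons c v : word M (c :: v) <-> inA M c /\ word M v.
Proof.
split.
  by move=> H; split; [apply: H; rewrite inE eqxx | move=> x xv; apply: H; rewrite inE xv orbT].
by move=> [Hc Hv] x; rewrite inE => /orP[/eqP->|/Hv].
Qed.

Lemma word_nil : word M [::].
Proof. by []. Qed.

Lemma word_cat u v : word M u -> word M v -> word M (u ++ v).
Proof. by move=> Hu Hv x; rewrite mem_cat => /orP[/Hu|/Hv]. Qed.

Lemma word_nseq k c : inA M c -> word M (nseq k c).
Proof. by move=> Hc x /nseqP[-> _]. Qed.

Lemma word_prefix x n : infword M x -> word M (pref x n).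
Proof. by move=> Hx y /mapP[k _ ->]. Qed.

Lemma infword_cons c x : inA M c -> infword M x -> infword M (cons_w c x).
Proof. by move=> Hc Hx [|k] /=. Qed.

Lemma infword_sh x : infword M x -> infword M (sh x).
Proof. by move=> Hx k; apply: Hx. Qed.

Lemma infword_cst c : inA M c -> infword M (cst c).
Proof. by move=> Hc k. Qed.

Lemma infword_app p x : word M p -> infword M x -> infword M (app_w p x).
Proof.
elim: p => [|c p IH] //= /word_cons [Hc Hp] Hx.
by apply: infword_cons => //; apply: IH.
Qed.

Lemma cyl_cons c v x : cyl M (c :: v) x -> x 0%N = c /\ cyl M v (sh x).
Proof.
have E : pref x (size v).+1 = x 0%N :: pref (sh x) (size v).
  by rewrite -{1}(cons_sh x) prefix_cons.
rewrite /cyl /= E; move=> [Hx [-> ->]]; split => //; split=> //.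
exact: infword_sh.
Qed.

Lemma cyl_cons_w c v x : inA M c -> cyl M v x -> cyl M (c :: v) (cons_w c x).
Proof.
move=> Hc [Hx Hp]; split; first exact: infword_cons.
by rewrite /= prefix_cons Hp.
Qed.

Lemma cyl_prefix x n : infword M x -> cyl M (pref x n) x.
Proof. by move=> Hx; split=> //; rewrite size_prefix. Qed.

Lemma cyl_nil x : infword M x -> cyl M [::] x.
Proof. by move=> Hx; split. Qed.

Lemma cyl_app p x : word M p -> infword M x -> cyl M p (app_w p x).
Proof.
move=> Hp Hx; split; first exact: infword_app.
by rewrite -[size p]addn0 prefix_app cats0.
Qed.

Lemma cyl_take v1 v2 x : cyl M v2 x -> take (size v1) v2 = v1 -> cyl M v1 x.
Proof.
move=> [Hx Hp] Ht; split => //.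
have le : (size v1 <= size v2)%N by rewrite -Ht size_take_min; lia.
by rewrite -(@take_prefix x _ _ le) Hp.
Qed.

Lemma edge_cat p n q1 q2 : word M p -> edgeE M n q1 q2 ->
  edgeE M (size p + n) (p ++ q1) (p ++ q2).
Proof.
elim: p => [|c p IH] //= /word_cons [Hc Hp] He.
by apply: Ecat => //; apply: IH.
Qed.

Lemma edge_glue p k i : word M p -> inA M i -> i <> 1%N ->
  edgeE M (size p + k.+1) (p ++ 1%N :: nseq k 2%N) (p ++ i :: nseq k 1%N).
Proof. by move=> Hp Hi Hi1; apply: edge_cat => //; apply: ESl. Qed.

Lemma edge_glue' p k i : word M p -> inA M i -> i <> 1%N ->
  edgeE M (size p + k.+1) (p ++ i :: nseq k 1%N) (p ++ 1%N :: nseq k 2%N).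
Proof. by move=> Hp Hi Hi1; apply: edge_cat => //; apply: ESr. Qed.

Variable in2 : inA M 2.

Lemma in1 : inA M 1.
Proof. by move: in2; rewrite /inA; case: M => // m [_ ?]; split=> //; lia. Qed.

Lemma half_prefix v1 v2 : word M v2 -> take (size v1) v2 = v1 ->
  wedge_half M v1 v2 (app_w v2 (cons_w 1 (cst 2))).
Proof.
move=> Hv2 Ht.
have Hz : infword M (app_w v2 (cons_w 1 (cst 2))).
  by apply: infword_app => //; apply: infword_cons; [exact: in1|exact: infword_cst].
split; first by apply: (@cyl_take _ v2) => //; apply: cyl_app => //;
  apply: infword_cons; [exact: in1|exact: infword_cst].
move=> n Hn.
have le2 : (size v2 < n)%N by move: Hn; rewrite gtn_max => /andP[].
set k := (n - size v2).-1.
have En : n = (size v2 + k.+1)%N by rewrite /k; lia.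
exists (v2 ++ 2%N :: nseq k 1%N); split; first by rewrite size_cat /= size_nseq; lia.
split; first by apply: word_cat => //; apply/word_cons; split => //; apply: word_nseq; exact: in1.
split; first by rewrite take_size_cat.
rewrite En prefix_app prefix_cons prefix_cst.
by apply: edge_glue.
Qed.

Lemma wedge_same v1 v2 y : word M v1 -> word M v2 -> cyl M v1 y -> cyl M v2 y ->
  wedge M v1 v2 !=set0.
Proof.
move=> Hv1 Hv2 [Hy H1] [_ H2].
have [le|le] := leqP (size v1) (size v2).
  exists (app_w v2 (cons_w 1 (cst 2))); left; apply: half_prefix => //.
  by rewrite -H2 take_prefix // H1.
exists (app_w v1 (cons_w 1 (cst 2))); right; apply: half_prefix => //.
by rewrite -H1 take_prefix ?H2 //; apply: ltnW.
Qed.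

Lemma wedgeC v1 v2 : wedge M v1 v2 = wedge M v2 v1.
Proof. by apply: funext => z; apply: propext; rewrite /wedge /=; split => -[]; auto. Qed.

Lemma half_cons c v1 v2 x : inA M c -> wedge_half M v1 v2 x ->
  wedge_half M (c :: v1) (c :: v2) (cons_w c x).
Proof.
move=> Hc [Hx H]; split; first exact: cyl_cons_w.
move=> [|n] //= Hn.
have Hn' : (maxn (size v1) (size v2) < n)%N by move: Hn; rewrite /= !gtn_max; lia.
have [u [Hu1 [Hu2 [Hu3 Hu4]]]] := H n Hn'.
exists (c :: u); split; first by rewrite /= Hu1.
split; first by apply/word_cons.
split; first by rewrite /= Hu3.
by rewrite prefix_cons; apply: Ecat.
Qed.

Lemma wedge_cons c v1 v2 : inA M c -> wedge M v1 v2 !=set0 ->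
  wedge M (c :: v1) (c :: v2) !=set0.
Proof.
move=> Hc [x [Hx|Hx]]; exists (cons_w c x); [left|right]; exact: half_cons.
Qed.

Lemma half_glue k i : inA M i -> i <> 1%N ->
  wedge_half M (1%N :: nseq k 2%N) (i :: nseq k 1%N) (cons_w 1 (cst 2)).
Proof.
move=> Hi Hi1; split.
  apply: cyl_cons_w; first exact: in1.
  by split; [exact: infword_cst|rewrite size_nseq prefix_cst].
move=> n; rewrite /= !size_nseq maxnn => Hn.
exists (i :: nseq n.-1 1%N); split; first by rewrite /= size_nseq; lia.
split; first by apply/word_cons; split => //; apply: word_nseq; exact: in1.
split; first by rewrite /= take_nseq //; lia.
have -> : n = n.-1.+1 by lia.
rewrite prefix_cons prefix_cst; exact: ESl.
Qed.

End Words.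

End PartB.
Import PartB.

Module PartC.
Import Order.TTheory GRing.Theory Num.Theory.
Local Open Scope ring_scope.
Local Open Scope classical_set_scope.

Definition links M (vs : seq (seq nat)) := forall i, (i.+1 < size vs)%N ->
  wedge M (nth [::] vs i) (nth [::] vs i.+1) !=set0.

Lemma links_cons M v vs : links M (v :: vs) <->
  ((vs <> [::] -> wedge M v (head [::] vs) !=set0) /\ links M vs).
Proof.
split.
  move=> H; split.
    move=> ne; have := H 0%N; rewrite /= nth0; apply; case: vs ne {H} => //.
  by move=> i Hi; apply: (H i.+1).
move=> [H1 H2] [|i] /= Hi; last by apply: H2.
by rewrite nth0; apply: H1; case: vs Hi {H2}.
Qed.

Lemma chainE M vs w w' : chain M vs w w' <->
  [/\ vs <> [::], (forall v, v \in vs -> word M v), cyl M (head [::] vs) w,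
      cyl M (last [::] vs) w' & links M vs].
Proof.
rewrite /chain /links; split.
  by move=> [? [? [? [? ?]]]]; split.
by move=> [? ? ? ? ?]; do 4 (split => //).
Qed.

Lemma cons_ne (T : Type) (x : T) s : x :: s <> [::].
Proof. by []. Qed.

Section Chains.
Variable M : option nat.
Variable in2 : inA M 2.

Lemma chain1 v w w' : word M v -> cyl M v w -> cyl M v w' -> chain M [:: v] w w'.
Proof.
move=> Hv H1 H2; apply/chainE; split; [by []| |by []|by []|by move=> [|i]].
by move=> u; rewrite inE => /eqP->.
Qed.

Lemma chain1E v w w' : chain M [:: v] w w' -> [/\ word M v, cyl M v w & cyl M v w'].
Proof. move/chainE => [_ Hw H1 H2 _]; split => //; apply: Hw; exact: mem_head. Qed.

Lemma chain_consE v vs w w' : chain M (v :: vs) w w' -> vs <> [::] ->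
  [/\ word M v, cyl M v w, wedge M v (head [::] vs) !=set0 &
     forall y, cyl M (head [::] vs) y -> chain M vs y w'].
Proof.
move/chainE => [_ Hw H1 H2 /links_cons [H3 H4]] ne; split => //.
- by apply: Hw; exact: mem_head.
- exact: H3.
move=> y Hy; apply/chainE; split => //.
  by move=> u uin; apply: Hw; rewrite inE uin orbT.
by move: H2; rewrite /=; case: vs ne {Hw H1 H3 H4 Hy}.
Qed.

Lemma chain_cons v vs w y w' : word M v -> cyl M v w ->
  wedge M v (head [::] vs) !=set0 -> chain M vs y w' -> chain M (v :: vs) w w'.
Proof.
move=> Hv Hc Hwd /chainE [ne Hw H1 H2 H3]; apply/chainE; split => //.
- by move=> u; rewrite inE => /orP[/eqP->|/Hw].
- by move: H2; case: vs ne {Hw H1 H3 Hwd}.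
by apply/links_cons; split.
Qed.

Lemma chain_head vs w w' : chain M vs w w' -> cyl M (head [::] vs) w.
Proof. by move/chainE => []. Qed.

Lemma chain_last vs w w' : chain M vs w w' -> cyl M (last [::] vs) w'.
Proof. by move/chainE => []. Qed.

Lemma chain_words vs w w' : chain M vs w w' -> forall v, v \in vs -> word M v.
Proof. by move/chainE => []. Qed.

Lemma chain_ne vs w w' : chain M vs w w' -> vs <> [::].
Proof. by move/chainE => []. Qed.

Lemma cyl_some v : word M v -> exists y, cyl M v y.
Proof.
move=> Hv; exists (app_w v (cst 2)); apply: cyl_app => //; exact: infword_cst.
Qed.

Lemma chain_cat' vs1 vs2 w y y' w' : chain M vs1 w y -> chain M vs2 y' w' ->
  wedge M (last [::] vs1) (head [::] vs2) !=set0 -> chain M (vs1 ++ vs2) w w'.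
Proof.
elim: vs1 w => [|v vs1 IH] w; first by move/chain_ne.
case: vs1 IH => [|v2 vs1] IH.
  move=> /chain1E [Hv Hc _] H2 Hwd /=; exact: chain_cons Hwd H2.
move=> H1 H2 Hwd.
have [Hv Hc Hwd1 Hr] := chain_consE H1 (@cons_ne _ _ _).
have Hv2 : word M v2 by apply: (chain_words H1); rewrite !inE eqxx orbT.
have [z Hz] := cyl_some Hv2.
apply: (chain_cons (y := z)) => //.
exact: (IH z (Hr z Hz) H2 Hwd).
Qed.

Lemma chain_cat vs1 vs2 w y w' : chain M vs1 w y -> chain M vs2 y w' ->
  chain M (vs1 ++ vs2) w w'.
Proof.
move=> H1 H2; apply: (chain_cat' H1 H2).
apply: (wedge_same in2 (y := y)).
- by apply: (chain_words H1); case: vs1 H1 {H2} => [/chain_ne//|v vs _]; rewrite /= mem_last.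
- by apply: (chain_words H2); case: vs2 H2 {H1} => [/chain_ne//|v vs _]; rewrite mem_head.
- exact: chain_last H1.
- exact: chain_head H2.
Qed.

Lemma chain_rev vs w w' : chain M vs w w' -> chain M (rev vs) w' w.
Proof.
elim: vs w => [|v vs IH] w; first by move/chain_ne.
case: vs IH => [|v2 vs] IH.
  by move=> /chain1E [Hv H1 H2]; apply: chain1.
move=> H.
have [Hv Hc Hwd1 Hr] := chain_consE H (@cons_ne _ _ _).
have Hv2 : word M v2 by apply: (chain_words H); rewrite !inE eqxx orbT.
have [z Hz] := cyl_some Hv2.
rewrite rev_cons -cats1.
apply: (chain_cat' (IH z (Hr z Hz)) (chain1 Hv Hc Hc)).
by rewrite /= -wedgeC rev_cons last_rcons.
Qed.

Lemma chain_map c vs w w' : inA M c -> chain M vs w w' ->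
  chain M (map (cons c) vs) (cons_w c w) (cons_w c w').
Proof.
move=> Hc; elim: vs w => [|v vs IH] w; first by move/chain_ne.
case: vs IH => [|v2 vs] IH.
  move=> /chain1E [Hv H1 H2]; apply: chain1; try exact: cyl_cons_w.
  by apply/word_cons.
move=> H.
have [Hv Hcy Hwd1 Hr] := chain_consE H (@cons_ne _ _ _).
have Hv2 : word M v2 by apply: (chain_words H); rewrite !inE eqxx orbT.
have [z Hz] := cyl_some Hv2.
apply: (chain_cons (y := cons_w c z)).
- by apply/word_cons.
- exact: cyl_cons_w.
- by apply: wedge_cons.
exact: IH (Hr z Hz).
Qed.

End Chains.

End PartC.
Import PartC.

Module PartD.
Import Order.TTheory GRing.Theory Num.Theory.
Local Open Scope ring_scope.
Local Open Scope classical_set_scope.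

Notation o := (cst 1).
Notation tw := (cst 2).

Section Rho.
Variable R : realType.
Variable M : option nat.
Variable a : nat -> R.
Variable in2 : inA M 2.
Variable Hw : is_weight a.

Lemma a_bnd i : (1 <= i)%N -> 0 < a i /\ a i <= 2^-1.
Proof. by case: Hw => H _ /H /andP[? ]; rewrite mul1r. Qed.

Lemma a1 : a 1 = 2^-1.
Proof. by case: Hw => _ [_ [-> _]]; rewrite mul1r. Qed.

Lemma a2 : a 2 = 2^-1.
Proof. by case: Hw => _ [_ [_ [-> _]]]; rewrite mul1r. Qed.

Lemma inA_ge1 i : inA M i -> (1 <= i)%N.
Proof. by case. Qed.

Lemma Delta_cons c v : Delta a (c :: v) = a c * Delta a v.
Proof. by rewrite /Delta big_cons. Qed.

Lemma Delta_nil : Delta a [::] = 1.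
Proof. by rewrite /Delta big_nil. Qed.

Lemma Delta_pos v : word M v -> 0 < Delta a v.
Proof.
elim: v => [|c v IH]; first by rewrite Delta_nil.
move=> /word_cons [Hc Hv]; rewrite Delta_cons mulr_gt0 //; last exact: IH.
by case: (a_bnd (inA_ge1 Hc)).
Qed.

Lemma Delta_pref x n : infword M x -> Delta a (pref x n) <= ep R n.
Proof.
elim: n x => [|n IH] x Hx; first by rewrite prefix0 Delta_nil ep0.
rewrite -(cons_sh x) prefix_cons Delta_cons epS.
have [h1 h2] := a_bnd (inA_ge1 (Hx 0%N)).
have := IH _ (infword_sh Hx); have := Delta_pos (word_prefix (n:=n) (infword_sh Hx)).
have := ep_ge0 R n. nra.
Qed.

Lemma Delta_nseq k c : a c = 2^-1 -> Delta a (nseq k c) = ep R k.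
Proof.
move=> ac; elim: k => [|k IH]; first by rewrite Delta_nil ep0.
by rewrite /= Delta_cons IH ac epS mulrC.
Qed.

Definition cost (vs : seq (seq nat)) := \sum_(v <- vs) Delta a v.

Lemma cost_ge0 vs w w' : chain M vs w w' -> 0 <= cost vs.
Proof.
move=> /chain_words Hw'; rewrite /cost big_seq; apply: sumr_ge0 => v /Hw' Hv.
exact: ltW (Delta_pos Hv).
Qed.

Definition rset w w' := [set s | exists vs, chain M vs w w' /\ s = cost vs].

Lemma rho_def w w' : rho M a w w' = inf (rset w w').
Proof. by []. Qed.

Lemma rset_lb w w' : lbound (rset w w') 0.
Proof. by move=> _ [vs [Hc ->]]; exact: cost_ge0 Hc. Qed.

Lemma rho_ge0 w w' : 0 <= rho M a w w'.
Proof.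
rewrite rho_def; case: (pselect (rset w w' !=set0)) => ne.
  by apply: lb_le_inf => //; exact: rset_lb.
have -> : rset w w' = set0 by apply/seteqP; split => // s Hs; apply: ne; exists s.
by rewrite inf0.
Qed.

Lemma rho_le vs w w' : chain M vs w w' -> rho M a w w' <= cost vs.
Proof.
move=> Hc; rewrite rho_def; apply: ge_inf; first by exists 0; exact: rset_lb.
by exists vs.
Qed.

Lemma rho_ge (r : R) w w' : infword M w -> infword M w' ->
  (forall vs, chain M vs w w' -> r <= cost vs) -> r <= rho M a w w'.
Proof.
move=> H1 H2 H; rewrite rho_def; apply: lb_le_inf; last by move=> _ [vs [Hc ->]]; exact: H.
exists (cost [:: [::]]); exists [:: [::]]; split => //.
by apply: chain1 => //; apply: cyl_nil.
Qed.

Lemma rho_cyl v w w' : word M v -> cyl M v w -> cyl M v w' -> rho M a w w' <= Delta a v.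
Proof.
move=> Hv H1 H2; have := rho_le (chain1 Hv H1 H2).
by rewrite /cost big_cons big_nil addr0.
Qed.

Lemma rho_le1 w w' : infword M w -> infword M w' -> rho M a w w' <= 1.
Proof. by move=> H1 H2; rewrite -Delta_nil; apply: rho_cyl => //; apply: cyl_nil. Qed.

Lemma chain_close w w' e : infword M w -> infword M w' -> 0 < e ->
  exists vs, chain M vs w w' /\ cost vs < rho M a w w' + e.
Proof.
move=> H1 H2 e0.
have ne : rset w w' !=set0.
  exists (cost [:: [::]]); exists [:: [::]]; split => //.
  by apply: chain1 => //; apply: cyl_nil.
have : inf (rset w w') < inf (rset w w') + e by rewrite ltrDl.
move=> /(inf_lt ne) [_ [vs [Hc ->]] Hlt]; by exists vs.
Qed.

Lemma rho_tri w y w' : infword M w -> infword M y -> infword M w' ->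
  rho M a w w' <= rho M a w y + rho M a y w'.
Proof.
move=> H1 H2 H3; apply/ler_addgt0Pr => e e0.
have e2 : 0 < e / 2 by rewrite divr_gt0.
have [vs1 [C1 L1]] := chain_close H1 H2 e2.
have [vs2 [C2 L2]] := chain_close H2 H3 e2.
have := rho_le (chain_cat in2 C1 C2); rewrite /cost big_cat /= -!/(cost _).
lra.
Qed.

Lemma rho_sym w w' : infword M w -> infword M w' -> rho M a w w' = rho M a w' w.
Proof.
have key : forall u u', infword M u -> infword M u' -> rho M a u u' <= rho M a u' u.
  move=> u u' Hu Hu'; apply: rho_ge => // vs Hc.
  have := rho_le (chain_rev in2 Hc); by rewrite /cost big_rev.
by move=> H1 H2; apply/eqP; rewrite eq_le !key.
Qed.

Lemma rho_cons c w w' : inA M c -> infword M w -> infword M w' ->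
  rho M a (cons_w c w) (cons_w c w') <= a c * rho M a w w'.
Proof.
move=> Hc H1 H2; have [ac0 _] := a_bnd (inA_ge1 Hc).
rewrite mulrC -ler_pdivrMr //; apply: rho_ge => // vs Hv.
rewrite ler_pdivrMr // mulrC.
have E : cost (map (cons c) vs) = a c * cost vs.
  by rewrite /cost big_map mulr_sumr; apply: eq_bigr => v _; rewrite Delta_cons.
by have := rho_le (chain_map in2 Hc Hv); rewrite E.
Qed.

Lemma rho_glue i : inA M i -> i <> 1%N -> rho M a (cons_w 1 tw) (cons_w i o) = 0.
Proof.
move=> Hi Hi1; apply/eqP; rewrite eq_le rho_ge0 andbT.
have Hi0 := a_bnd (inA_ge1 Hi).
have in1' := in1 in2.
apply: (@approx_le _ _ _ 1) => k; rewrite add0r mul1r.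
have Hc : chain M [:: 1%N :: nseq k 2%N; i :: nseq k 1%N] (cons_w 1 tw) (cons_w i o).
  apply: (chain_cons (y := cons_w i o)).
  - by apply/word_cons; split => //; apply: word_nseq.
  - apply: cyl_cons_w => //; split; [exact: infword_cst|by rewrite size_nseq prefix_cst].
  - by exists (cons_w 1 tw); left; apply: half_glue.
  apply: chain1; first by apply/word_cons; split => //; apply: word_nseq.
  + apply: cyl_cons_w => //; split; [exact: infword_cst|by rewrite size_nseq prefix_cst].
  + apply: cyl_cons_w => //; split; [exact: infword_cst|by rewrite size_nseq prefix_cst].
apply: le_trans (rho_le Hc) _.
rewrite /cost !big_cons big_nil !Delta_cons !Delta_nseq ?a1 ?a2 //.
have := ep_ge0 R k; case: Hi0 => h1 h2; nra.
Qed.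

Lemma rho_glue' i : inA M i -> i <> 1%N -> rho M a (cons_w i o) (cons_w 1 tw) = 0.
Proof.
move=> Hi Hi1; have i1 := in1 in2.
rewrite rho_sym ?rho_glue //; apply: infword_cons => //; exact: infword_cst.
Qed.

End Rho.

End PartD.
Import PartD.

Module E.
Import Order.TTheory GRing.Theory Num.Theory.
Local Open Scope ring_scope.

Notation o := (cst 1).
Notation tw := (cst 2).

Definition pw (x : nat -> nat) := forall k, (1 <= x k)%N.

Lemma pw_cons c x : (1 <= c)%N -> pw x -> pw (cons_w c x).
Proof. by move=> Hc Hx [|k] /=. Qed.
Lemma pw_sh x : pw x -> pw (sh x).
Proof. by move=> Hx k; apply: Hx. Qed.
Lemma pw_cst c : (1 <= c)%N -> pw (cst c).
Proof. by move=> Hc k. Qed.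
Lemma pw_consE c x : pw (cons_w c x) -> (1 <= c)%N /\ pw x.
Proof. by move=> H; split; [apply: (H 0%N)|move=> k; apply: (H k.+1)]. Qed.

Section Mu.
Variable R : realType.
Variable a : nat -> R.

Definition aa (c : nat) : R := if (1 <= c)%N then a c else 2^-1.

Variable Ha : forall c, 0 < aa c <= 2^-1.
Variable Ha1 : aa 1 = 2^-1.
Variable Ha2 : aa 2 = 2^-1.

Definition stepm (f : (nat -> nat) -> (nat -> nat) -> R) (x y : nat -> nat) : R :=
  if x 0%N == y 0%N then (if (2 <= x 0%N)%N then 2^-1 else 0) + aa (x 0%N) * f (sh x) (sh y)
  else if (2 <= x 0%N)%N && (2 <= y 0%N)%N then 2^-1
  else if x 0%N == 1%N then f (sh x) tw / 2
  else if y 0%N == 1%N then f (sh y) tw / 2 else 0.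

Fixpoint mun (n : nat) : (nat -> nat) -> (nat -> nat) -> R :=
  if n is n'.+1 then stepm (mun n') else fun _ _ => 0.

Lemma stepm_contract f g e : (forall x y, `|f x y - g x y| <= e) ->
  forall x y, `|stepm f x y - stepm g x y| <= e / 2.
Proof.
move=> H x y; have e0 : 0 <= e by apply: le_trans (H x y).
rewrite /stepm; case: ifP => _.
  have [h1 h2] := andP (Ha (x 0%N)); have := H (sh x) (sh y).
  rewrite opprD addrACA subrr add0r -mulrBr normrM ger0_norm ?(ltW h1) // => h3.
  have := normr_ge0 (f (sh x) (sh y) - g (sh x) (sh y)); nra.
case: ifP => _; first by rewrite subrr normr0; lra.
case: ifP => _.
  by rewrite -mulrBl normrM (ger0_norm (x := 2^-1)) ?invr_ge0 //; have := H (sh x) tw; lra.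
case: ifP => _.
  by rewrite -mulrBl normrM (ger0_norm (x := 2^-1)) ?invr_ge0 //; have := H (sh y) tw; lra.
by rewrite subrr normr0; lra.
Qed.

Lemma stepm_bnd f : (forall x y, 0 <= f x y <= 1) -> forall x y, 0 <= stepm f x y <= 1.
Proof.
move=> H x y; rewrite /stepm; case: ifP => _.
  have [h1 h2] := andP (Ha (x 0%N)); have /andP[h3 h4] := H (sh x) (sh y).
  case: ifP => _; nra.
case: ifP => _; first lra.
case: ifP => _; first by have /andP[h3 h4] := H (sh x) tw; lra.
case: ifP => _; first by have /andP[h3 h4] := H (sh y) tw; lra.
lra.
Qed.

Lemma mun_bnd n x y : 0 <= mun n x y <= 1.
Proof.
elim: n x y => [|n IH] x y /=; first lra.
exact: stepm_bnd.
Qed.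

Lemma mun_cauchy n x y : `|mun n.+1 x y - mun n x y| <= ep R n.
Proof.
elim: n x y => [|n IH] x y.
  rewrite ep0 /= subr0; have := mun_bnd 1 x y; rewrite /= => /andP[h1 h2].
  by rewrite ger0_norm.
rewrite epS; exact: stepm_contract.
Qed.

Definition mu x y := alim (fun n => mun n x y).

Lemma mu_approx x y n : `|mu x y - mun n x y| <= 2 * ep R n.
Proof. by apply: alim_spec => k; apply: mun_cauchy. Qed.

Lemma mu_rec x y : mu x y = stepm mu x y.
Proof.
apply: (@approx_eq _ _ _ 3) => n.
have h1 := mu_approx x y n.+1.
have h2 : `|stepm (mun n) x y - stepm mu x y| <= 2 * ep R n / 2.
  apply: stepm_contract => u v; rewrite distrC; exact: mu_approx.
move: h1 h2; rewrite /= epS => h1 h2.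
have := ep_ge0 R n.
rewrite !ler_norml in h1 h2 *; lra.
Qed.

Lemma mu_bnd x y : 0 <= mu x y <= 1.
Proof.
apply/andP; split.
  apply: (@approx_le _ _ _ 2) => n; have := mu_approx x y n; have := mun_bnd n x y.
  rewrite ler_norml; lra.
apply: (@approx_le _ _ _ 2) => n; have := mu_approx x y n; have := mun_bnd n x y.
rewrite ler_norml; lra.
Qed.

Lemma stepm_sym f : (forall x y, f x y = f y x) -> forall x y, stepm f x y = stepm f y x.
Proof.
move=> H x y; rewrite /stepm eq_sym; case: eqP => [E|ne].
  by rewrite E H.
rewrite andbC; case: ifP => // _.
case: (x 0%N =P 1%N) => [E1|n1]; case: (y 0%N =P 1%N) => [E2|n2] //.
by exfalso; apply: ne; rewrite E1 E2.
Qed.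

Lemma mun_sym n x y : mun n x y = mun n y x.
Proof. elim: n x y => [|n IH] x y //=; exact: stepm_sym. Qed.

Lemma mu_sym x y : mu x y = mu y x.
Proof.
apply: (@approx_eq _ _ _ 4) => n.
have := mu_approx x y n; have := mu_approx y x n; rewrite mun_sym.
rewrite !ler_norml; lra.
Qed.

Lemma mu_cc c x y : mu (cons_w c x) (cons_w c y) =
  (if (2 <= c)%N then 2^-1 else 0) + aa c * mu x y.
Proof. by rewrite mu_rec /stepm /= eqxx. Qed.

Lemma mu_cd c d x y : c <> d -> (2 <= c)%N -> (2 <= d)%N ->
  mu (cons_w c x) (cons_w d y) = 2^-1.
Proof. by move=> /eqP/negPf cd c2 d2; rewrite mu_rec /stepm /= cd c2 d2. Qed.

Lemma mu_1d d x y : (2 <= d)%N -> mu (cons_w 1 x) (cons_w d y) = mu x tw / 2.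
Proof.
move=> d2; rewrite mu_rec /stepm /=.
by case: d d2 => [|[|d]] //.
Qed.

Lemma mu_c1 c x y : (2 <= c)%N -> mu (cons_w c x) (cons_w 1 y) = mu y tw / 2.
Proof. by move=> c2; rewrite mu_sym mu_1d. Qed.

Definition H x := mu x x.
Definition S x := mu x tw.
Definition K x := H x + 1 - 2 * S x.
Definition Dd x y := H x + H y - 2 * mu x y.

Lemma H_cons c x : H (cons_w c x) = (if (2 <= c)%N then 2^-1 else 0) + aa c * H x.
Proof. exact: mu_cc. Qed.

Lemma S_cons1 x : S (cons_w 1 x) = S x / 2.
Proof. by rewrite /S -{1}[tw]cst_cons mu_1d. Qed.

Lemma S_cons2 x : S (cons_w 2 x) = 2^-1 + S x / 2.
Proof. by rewrite /S -{1}[tw]cst_cons mu_cc Ha2 /= mulrC. Qed.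

Lemma S_cons3 c x : (3 <= c)%N -> S (cons_w c x) = 2^-1.
Proof. by move=> c3; rewrite /S -{1}[tw]cst_cons mu_cd //; lia. Qed.

Lemma H_tw : H tw = 1.
Proof. have := H_cons 2 tw; rewrite cst_cons Ha2 /=; lra. Qed.

Lemma H_o : H o = 0.
Proof. have := H_cons 1 o; rewrite cst_cons Ha1 /=; lra. Qed.

Lemma S_tw : S tw = 1.
Proof. exact: H_tw. Qed.

Lemma S_o : S o = 0.
Proof. have := S_cons1 o; rewrite cst_cons; lra. Qed.

Lemma K_cons1 x : K (cons_w 1 x) = K x / 2 + 2^-1.
Proof. rewrite /K S_cons1 H_cons Ha1 /=; lra. Qed.

Lemma K_cons2 x : K (cons_w 2 x) = K x / 2.
Proof. rewrite /K S_cons2 H_cons Ha2 /=; lra. Qed.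

Lemma K_cons3 c x : (3 <= c)%N -> K (cons_w c x) = 2^-1 + aa c * H x.
Proof.
move=> c3; rewrite /K S_cons3 // H_cons.
have -> : (2 <= c)%N by lia.
lra.
Qed.

Lemma H_bnd x : 0 <= H x <= 1.
Proof. exact: mu_bnd. Qed.

Lemma S_bnd x : 0 <= S x <= 1.
Proof. exact: mu_bnd. Qed.

End Mu.

End E.
Import E.

Module PartF.
Import Order.TTheory GRing.Theory Num.Theory.
Local Open Scope ring_scope.

Definition pwl (v : seq nat) := all (fun c => 1 <= c)%N v.

Lemma pref_consE x c v : pref x (size (c :: v)) = c :: v ->
  x 0%N = c /\ pref (sh x) (size v) = v.
Proof. by rewrite -{1}(cons_sh x) /= prefix_cons => -[-> ->]. Qed.

Section Mu2.
Variable R : realType.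
Variable a : nat -> R.
Variable Ha : forall c, 0 < aa a c <= 2^-1.
Variable Ha1 : aa a 1 = 2^-1.
Variable Ha2 : aa a 2 = 2^-1.

Local Notation mu := (mu a).
Local Notation H := (H a).
Local Notation S := (S a).
Local Notation K := (K a).
Local Notation Dd := (Dd a).
Local Notation aa := (aa a).

Definition Da (v : seq nat) : R := \prod_(c <- v) aa c.

Lemma Da_cons c v : Da (c :: v) = aa c * Da v.
Proof. by rewrite /Da big_cons. Qed.

Lemma Da_ge0 v : 0 <= Da v.
Proof. by rewrite /Da; apply: prodr_ge0 => c _; case/andP: (Ha c) => /ltW. Qed.

Lemma mu_le_H x y : pw x -> pw y -> mu x y <= H x.
Proof.
move=> Hx Hy; apply: (@approx_le _ _ _ 1) => n.
elim: n x y Hx Hy => [|n IH] x y Hx Hy.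
  by rewrite ep0; have := mu_bnd Ha x y; have := H_bnd Ha x; lra.
rewrite -(cons_sh x) -(cons_sh y).
move: (Hx 0%N) (Hy 0%N) (pw_sh Hx) (pw_sh Hy); move: (x 0%N) (y 0%N) (sh x) (sh y).
move=> c d x1 y1 hc hd hx1 hy1 {Hx Hy x y}.
rewrite epS H_cons //.
have [h1 h2] := andP (Ha c).
have := H_bnd Ha x1; have := ep_ge0 R n.
case: (eqVneq c d) => [<-|cd].
  rewrite mu_cc //; have := IH _ _ hx1 hy1; case: (leqP 2 c) => _; nra.
case: (leqP 2 c) => c2.
  case: (leqP 2 d) => d2.
    rewrite mu_cd //; last by apply/eqP.
    nra.
  have -> : d = 1%N by lia.
  rewrite mu_c1 //; have := mu_bnd Ha y1 tw; nra.
have c1 : c = 1%N by lia.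
have d2 : (2 <= d)%N by move: cd; rewrite c1; lia.
rewrite c1 mu_1d // Ha1 /=.
have := IH _ _ hx1 (pw_cst (isT : (1 <= 2)%N)).
lra.
Qed.

Lemma S_le_H x : pw x -> S x <= H x.
Proof. by move=> Hx; apply: mu_le_H => //; apply: pw_cst. Qed.

Lemma S_ge x : pw x -> H x / 2 <= S x.
Proof.
move=> Hx; apply: (@approx_le _ _ _ 1) => n.
elim: n x Hx => [|n IH] x Hx.
  by rewrite ep0; have := S_bnd Ha x; have := H_bnd Ha x; lra.
rewrite -(cons_sh x).
move: (Hx 0%N) (pw_sh Hx); move: (x 0%N) (sh x) => c x1 hc hx1 {Hx x}.
rewrite epS H_cons //.
have := H_bnd Ha x1; have := S_bnd Ha x1; have := ep_ge0 R n.
have [h1 h2] := andP (Ha c).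
case: (leqP 3 c) => c3.
  rewrite S_cons3 //; have -> : (2 <= c)%N by lia.
  nra.
case: (eqVneq c 2) => [->|c2].
  by rewrite S_cons2 // Ha2 /=; lra.
have -> : c = 1%N by lia.
rewrite S_cons1 // Ha1 /=; have := IH _ hx1; lra.
Qed.

Lemma K_bnd x : pw x -> 0 <= K x <= 1.
Proof.
move=> Hx; have := S_ge Hx; have := S_le_H Hx; have := S_bnd Ha x.
rewrite /K; lra.
Qed.

Lemma Dd_cc c x y : Dd (cons_w c x) (cons_w c y) = aa c * Dd x y.
Proof. rewrite /Dd /E.H !mu_cc //; ring. Qed.

Lemma Dd_xx x : Dd x x = 0.
Proof. rewrite /Dd /E.H; ring. Qed.

Lemma Dd_sym x y : Dd x y = Dd y x.
Proof. rewrite /Dd mu_sym //; ring. Qed.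

Lemma Dd_ge0 x y : pw x -> pw y -> 0 <= Dd x y.
Proof.
move=> Hx Hy; have := mu_le_H Hx Hy; have := mu_le_H Hy Hx.
rewrite /Dd mu_sym //; lra.
Qed.

Lemma osc_HK v x x' : pwl v -> pw x -> pw x' ->
  pref x (size v) = v -> pref x' (size v) = v ->
  `|H x - H x'| <= Da v /\ `|K x - K x'| <= Da v.
Proof.
elim: v x x' => [|c v IH] x x' Hv Hx Hx' P P'.
  rewrite /Da big_nil; have := H_bnd Ha x; have := H_bnd Ha x'.
  have := K_bnd Hx; have := K_bnd Hx'; rewrite !ler_norml; lra.
move: Hv => /andP [hc hv].
have [e1 p1] := pref_consE P; have [e2 p2] := pref_consE P'.
have [IH1 IH2] := IH _ _ hv (pw_sh Hx) (pw_sh Hx') p1 p2.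
rewrite -(cons_sh x) -(cons_sh x') e1 e2 Da_cons.
move: IH1 IH2; move: (sh x) (sh x') => x1 x1' IH1 IH2.
have [h1 h2] := andP (Ha c).
have HH : `|H (cons_w c x1) - H (cons_w c x1')| <= aa c * Da v.
  rewrite !H_cons //.
  set h0 := (if _ then _ else _).
  have -> : h0 + aa c * H x1 - (h0 + aa c * H x1') = aa c * (H x1 - H x1') by ring.
  by rewrite normrM ger0_norm ?(ltW h1) // ler_pM2l.
split => //.
case: (leqP 3 c) => c3.
  rewrite !K_cons3 //.
  have -> : 2^-1 + aa c * H x1 - (2^-1 + aa c * H x1') = aa c * (H x1 - H x1') by ring.
  by rewrite normrM ger0_norm ?(ltW h1) // ler_pM2l.
case: (eqVneq c 2) => [->|c2].
  rewrite !K_cons2 // Ha2.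
  have -> : K x1 / 2 - K x1' / 2 = (K x1 - K x1') / 2 by ring.
  by rewrite normrM (ger0_norm (x := 2^-1)) ?invr_ge0 //; lra.
have -> : c = 1%N by lia.
rewrite !K_cons1 // Ha1.
have -> : K x1 / 2 + 2^-1 - (K x1' / 2 + 2^-1) = (K x1 - K x1') / 2 by ring.
by rewrite normrM (ger0_norm (x := 2^-1)) ?invr_ge0 //; lra.
Qed.

End Mu2.

End PartF.
Import PartF.

Module PartG.
Import Order.TTheory GRing.Theory Num.Theory.
Local Open Scope ring_scope.

Section Mu3.
Variable R : realType.
Variable a : nat -> R.
Variable Ha : forall c, 0 < aa a c <= 2^-1.
Variable Ha1 : aa a 1 = 2^-1.
Variable Ha2 : aa a 2 = 2^-1.

Local Notation mu := (mu a).
Local Notation H := (H a).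
Local Notation S := (S a).
Local Notation K := (K a).
Local Notation Dd := (Dd a).
Local Notation aa := (aa a).
Local Notation Da := (Da a).

Lemma Dd_cross2 c d x y : c <> d -> (2 <= c)%N -> (2 <= d)%N ->
  Dd (cons_w c x) (cons_w d y) = aa c * H x + aa d * H y.
Proof. by move=> cd c2 d2; rewrite /Dd !H_cons // mu_cd // c2 d2; lra. Qed.

Lemma Dd_1d d x y : (2 <= d)%N -> Dd (cons_w 1 x) (cons_w d y) = K x / 2 + aa d * H y.
Proof. by move=> d2; rewrite /Dd /K !H_cons // mu_1d // d2 Ha1 /= /E.S; lra. Qed.

Lemma Dd_c1 c x y : (2 <= c)%N -> Dd (cons_w c x) (cons_w 1 y) = aa c * H x + K y / 2.
Proof. by move=> c2; rewrite Dd_sym // Dd_1d //; lra. Qed.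

Lemma mu_o y : pw y -> mu o y = 0.
Proof.
move=> Hy; apply/eqP; rewrite eq_le; have := mu_le_H Ha Ha1 (pw_cst (isT : (1 <= 1)%N)) Hy.
rewrite H_o // => ->; by case/andP: (mu_bnd Ha o y).
Qed.

Lemma Dd_bnd x y : pw x -> pw y -> 0 <= Dd x y <= 1.
Proof.
move=> Hx Hy; rewrite Dd_ge0 //=.
apply: (@approx_le _ _ _ 1) => n.
elim: n x y Hx Hy => [|n IH] x y Hx Hy.
  rewrite ep0 /Dd; have := mu_bnd Ha x y; have := H_bnd Ha x; have := H_bnd Ha y.
  have := mu_le_H Ha Ha1 Hx Hy; lra.
rewrite -(cons_sh x) -(cons_sh y).
move: (Hx 0%N) (Hy 0%N) (pw_sh Hx) (pw_sh Hy); move: (x 0%N) (y 0%N) (sh x) (sh y).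
move=> c d x1 y1 hc hd hx1 hy1 {Hx Hy x y}.
rewrite epS.
have [h1 h2] := andP (Ha c); have [h3 h4] := andP (Ha d).
have := H_bnd Ha x1; have := H_bnd Ha y1; have := K_bnd Ha Ha1 Ha2 hx1; have := K_bnd Ha Ha1 Ha2 hy1.
have := ep_ge0 R n.
case: (eqVneq c d) => [<-|cd].
  rewrite Dd_cc //; have := IH _ _ hx1 hy1; have := Dd_ge0 Ha Ha1 hx1 hy1; nra.
case: (leqP 2 c) => c2.
  case: (leqP 2 d) => d2.
    have cd' : c <> d by apply/eqP.
    rewrite Dd_cross2 //; nra.
  have -> : d = 1%N by lia.
  rewrite Dd_c1 //; nra.
have c1 : c = 1%N by lia.
have d2 : (2 <= d)%N by move: cd; rewrite c1; lia.
rewrite c1 Dd_1d //; nra.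
Qed.

Lemma Dd_osc v x x' y : pwl v -> pw x -> pw x' -> pw y ->
  pref x (size v) = v -> pref x' (size v) = v ->
  `|Dd x y - Dd x' y| <= Da v.
Proof.
elim: v x x' y => [|c v IH] x x' y Hv Hx Hx' Hy P P'.
  rewrite /Da big_nil; have := Dd_bnd Hx Hy; have := Dd_bnd Hx' Hy.
  rewrite ler_norml; lra.
have Hv' := Hv; move: Hv => /andP [hc hv].
have [e1 p1] := pref_consE P; have [e2 p2] := pref_consE P'.
have [q1 q2] := osc_HK Ha Ha1 Ha2 hv (pw_sh Hx) (pw_sh Hx') p1 p2.
have IH' := IH (sh x) (sh x') (sh y) hv (pw_sh Hx) (pw_sh Hx') (pw_sh Hy) p1 p2.
rewrite -(cons_sh x) -(cons_sh x') -(cons_sh y) e1 e2 Da_cons.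
move: (Hy 0%N) IH' q1 q2; move: (sh x) (sh x') (y 0%N) (sh y) => x1 x1' d y1 hd IH' q1 q2.
have [h1 h2] := andP (Ha c).
have Hpos : 0 <= Da v by apply: Da_ge0.
case: (eqVneq c d) => [<-|cd].
  rewrite !Dd_cc // -mulrBr normrM ger0_norm ?(ltW h1) //.
  by rewrite ler_pM2l.
case: (leqP 2 c) => c2.
  case: (leqP 2 d) => d2.
    have cd' : c <> d by apply/eqP.
    rewrite !Dd_cross2 //.
    have -> : aa c * H x1 + aa d * H y1 - (aa c * H x1' + aa d * H y1) = aa c * (H x1 - H x1') by ring.
    by rewrite normrM ger0_norm ?(ltW h1) // ler_pM2l.
  have -> : d = 1%N by lia.
  rewrite !Dd_c1 //.
  have -> : aa c * H x1 + K y1 / 2 - (aa c * H x1' + K y1 / 2) = aa c * (H x1 - H x1') by ring.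
  by rewrite normrM ger0_norm ?(ltW h1) // ler_pM2l.
have c1 : c = 1%N by lia.
have d2 : (2 <= d)%N by move: cd; rewrite c1; lia.
rewrite c1 !Dd_1d // Ha1.
have -> : K x1 / 2 + aa d * H y1 - (K x1' / 2 + aa d * H y1) = (K x1 - K x1') / 2 by ring.
rewrite normrM (ger0_norm (x := 2^-1)) ?invr_ge0 //; lra.
Qed.

Definition gl1 r := app_w r (cons_w 1 tw).
Definition gl2 r i := app_w r (cons_w i o).

Lemma H_glue r i : (2 <= i)%N -> H (gl1 r) = H (gl2 r i).
Proof.
move=> i2; elim: r => [|c r IH] /=.
  rewrite !H_cons // H_tw // H_o // i2 Ha1 /=; lra.
by rewrite !H_cons // -/(gl1 r) -/(gl2 r i) IH.
Qed.

Lemma K_glue r i : pwl r -> (2 <= i)%N -> K (gl1 r) = K (gl2 r i).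
Proof.
move=> + i2; elim: r => [|c r IH] /=.
  move=> _; rewrite K_cons1 //.
  have Ktw : K tw = 0 by rewrite /K H_tw // S_tw //; lra.
  rewrite Ktw.
  case: (eqVneq i 2) => [->|i3].
    rewrite K_cons2 // /K H_o // S_o //; lra.
  rewrite K_cons3 ?H_o //; first lra.
  by move: i3 i2; case: i => [|[|[|i]]].
move=> /andP [hc hr].
rewrite -/(gl1 r) -/(gl2 r i).
case: (leqP 3 c) => c3.
  by rewrite !K_cons3 // (H_glue r i2).
case: (eqVneq c 2) => [->|c2].
  by rewrite !K_cons2 // IH.
have -> : c = 1%N by lia.
by rewrite !K_cons1 // IH.
Qed.

Lemma Ktw : K tw = 0.
Proof. by rewrite /K H_tw // S_tw //; lra. Qed.

Lemma Dd_glue r i y : pwl r -> (2 <= i)%N -> pw y -> Dd (gl1 r) y = Dd (gl2 r i) y.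
Proof.
move=> + i2; elim: r y => [|c r IH] y Hr Hy; rewrite -(cons_sh y);
  move: (Hy 0%N) (pw_sh Hy); move: (y 0%N) (sh y) => d y1 hd hy1.
  rewrite /gl1 /gl2 /=.
  case: (eqVneq d 1) => [->|d1].
    rewrite Dd_cc // Dd_c1 // H_o // Ha1 /Dd /K H_tw // mu_sym // /E.S; lra.
  have d2 : (2 <= d)%N by lia.
  rewrite Dd_1d // Ktw.
  case: (eqVneq d i) => [<-|di].
    by rewrite Dd_cc // /Dd H_o // mu_o //; lra.
  have di' : i <> d by apply/eqP; rewrite eq_sym.
  by rewrite Dd_cross2 // H_o //; lra.
move: Hr => /andP [hc hr].
rewrite /gl1 /gl2 /= -/(gl1 r) -/(gl2 r i).
case: (eqVneq c d) => [<-|cd].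
  by rewrite !Dd_cc // IH.
have cd' : c <> d by apply/eqP.
case: (leqP 2 c) => c2.
  case: (leqP 2 d) => d2.
    by rewrite !Dd_cross2 // (H_glue r i2).
  have -> : d = 1%N by lia.
  by rewrite !Dd_c1 // (H_glue r i2).
have c1 : c = 1%N by lia.
have d2 : (2 <= d)%N by move: cd; rewrite c1; lia.
by rewrite c1 !Dd_1d // (K_glue hr i2).
Qed.

End Mu3.

End PartG.
Import PartG.

Module PartHf.
Import Order.TTheory GRing.Theory Num.Theory.
Local Open Scope ring_scope.

Section Phi.
Variable R : realType.
Variable a : nat -> R.
Variable Ha : forall c, 0 < aa a c <= 2^-1.
Variable Ha1 : aa a 1 = 2^-1.
Variable Ha2 : aa a 2 = 2^-1.

Local Notation mu := (mu a).
Local Notation H := (H a).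
Local Notation aa := (aa a).
Local Notation mn := (@mn R).

Definition letter (s : (nat -> nat) * R) : nat :=
  if s.1 0%N == 1%N then 1%N else if s.2 <= 2^-1 then 1%N else s.1 0%N.

Definition nxt (s : (nat -> nat) * R) : (nat -> nat) * R :=
  if s.1 0%N == 1%N then (sh s.1, 2 * s.2)
  else if s.2 <= 2^-1 then (tw, 2 * s.2)
  else (sh s.1, (s.2 - 2^-1) / aa (s.1 0%N)).

Definition Phi (z : nat -> nat) (t : R) : nat -> nat :=
  fun k => letter (iter k nxt (z, t)).

Lemma Phi_cons z t : Phi z t = cons_w (letter (z, t)) (Phi (nxt (z, t)).1 (nxt (z, t)).2).
Proof.
apply: funext => -[|k] //=.
by rewrite /Phi iterSr -surjective_pairing.
Qed.

Lemma Phi_inv (P : (nat -> nat) -> Prop) z t :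
  P z -> P tw -> (forall x, P x -> P (sh x)) ->
  (forall x, P x -> P (cons_w 1 (sh x)) /\ P (cons_w (x 0%N) (sh x))) ->
  forall k, P (cons_w (letter (iter k nxt (z, t))) (sh ((iter k nxt (z, t)).1))).
Proof.
move=> Pz Ptw Psh Pc k.
have Hs : forall k, P (iter k nxt (z, t)).1.
  elim=> [|j IH] //=; rewrite /nxt; case: ifP => _ /=; first exact: Psh.
  by case: ifP => _ /=; [|exact: Psh].
have := Pc _ (Hs k); rewrite /letter; case: ifP => E; first by case.
by case: ifP => _; case.
Qed.

Lemma mn_half (t m : R) : mn t (m / 2) = mn (2 * t) m / 2.
Proof. by rewrite /mn; case: ifP => h1; case: ifP => h2 //; lra. Qed.

Lemma KEY n z y t : pw z -> pw y -> 0 <= t <= H z ->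
  `|mu (Phi z t) y - mn t (mu z y)| <= ep R n.
Proof.
elim: n z y t => [|n IH] z y t Hz Hy Ht.
  rewrite ep0; have := mu_bnd Ha (Phi z t) y; have := mu_bnd Ha z y; have := H_bnd Ha z.
  rewrite /mn; case: ifP => _; rewrite ler_norml; lra.
rewrite Phi_cons /letter /nxt /=.
rewrite -(cons_sh z) in Ht *; rewrite -(cons_sh y).
move: (Hz 0%N) (pw_sh Hz) (Hy 0%N) (pw_sh Hy) Ht.
move: (z 0%N) (sh z) (y 0%N) (sh y) => c z1 d y1 hc hz1 hd hy1 Ht {Hz Hy z y}.
rewrite /= epS.
have [h1 h2] := andP (Ha c).
have htw : pw tw by apply: pw_cst.
rewrite H_cons // in Ht.
case: (eqVneq c 1) => [c1|c1].
  subst c; rewrite Ha1 /= in Ht.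
  have Ht' : 0 <= 2 * t <= H z1 by lra.
  case: (eqVneq d 1) => [->|d1].
    rewrite !mu_cc // Ha1 /= !add0r.
    have := IH _ _ _ hz1 hy1 Ht'.
    rewrite (mulrC 2^-1) (mulrC 2^-1) mn_half -mulrBl normrM (ger0_norm (x := 2^-1)) ?invr_ge0 //.
    lra.
  have d2 : (2 <= d)%N by lia.
  rewrite !mu_1d //.
  have := IH _ _ _ hz1 htw Ht'.
  rewrite mn_half -mulrBl normrM (ger0_norm (x := 2^-1)) ?invr_ge0 //.
  lra.
have c2 : (2 <= c)%N by lia.
rewrite c2 /= in Ht.
case: ifP => tle.
  have Ht' : 0 <= 2 * t <= H tw by rewrite H_tw //; lra.
  case: (eqVneq d 1) => [->|d1].
    rewrite mu_cc // mu_c1 // Ha1 /= add0r.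
    have := IH _ _ _ htw hy1 Ht'.
    rewrite (mu_sym _ tw) // (mulrC 2^-1) mn_half -mulrBl normrM (ger0_norm (x := 2^-1)) ?invr_ge0 //.
    lra.
  have d2 : (2 <= d)%N by lia.
  rewrite mu_1d //.
  have := IH _ _ _ htw htw Ht'.
  have -> : mu tw tw = 1 by exact: H_tw.
  have -> : mn (2 * t) 1 = 2 * t by rewrite /mn; case: ifP => //; lra.
  have -> : mn t (mu (cons_w c z1) (cons_w d y1)) = t.
    have : 2^-1 <= mu (cons_w c z1) (cons_w d y1).
      case: (eqVneq c d) => [<-|cd].
        rewrite mu_cc // c2; have := mu_bnd Ha z1 y1; nra.
      by rewrite mu_cd //; apply/eqP.
    by rewrite /mn; case: ifP => //; lra.
  rewrite ler_norml ler_norml; lra.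
have tgt : 2^-1 < t by rewrite ltNge tle.
have Ht' : 0 <= (t - 2^-1) / aa c <= H z1.
  apply/andP; split; first by rewrite divr_ge0 //; lra.
  by rewrite ler_pdivrMr // mulrC; lra.
case: (eqVneq d c) => [->|dc].
  rewrite !mu_cc // c2.
  have := IH _ _ _ hz1 hy1 Ht'.
  set t' := (t - 2^-1) / aa c.
  have Et : t = 2^-1 + aa c * t' by rewrite /t' mulrC -mulrA mulVf ?mulr1; [lra|apply/eqP; lra].
  have -> : mn t (2^-1 + aa c * mu z1 y1) = 2^-1 + aa c * mn t' (mu z1 y1).
    rewrite /mn Et; case: ifP => h3; case: ifP => h4 //; nra.
  have -> : 2^-1 + aa c * mu (Phi z1 t') y1 - (2^-1 + aa c * mn t' (mu z1 y1)) =
    aa c * (mu (Phi z1 t') y1 - mn t' (mu z1 y1)) by ring.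
  rewrite normrM ger0_norm ?(ltW h1) //.
  have := ep_ge0 R n; move=> he hIH.
  have := normr_ge0 (mu (Phi z1 t') y1 - mn t' (mu z1 y1)); nra.
case: (eqVneq d 1) => [->|d1].
  rewrite !mu_c1 //.
  have := mu_bnd Ha y1 tw.
  rewrite /mn; case: ifP => hh; rewrite ?subrr ?normr0; have := ep_ge0 R n; lra.
have d2 : (2 <= d)%N by lia.
have cd : c <> d by apply/eqP; rewrite eq_sym.
rewrite !mu_cd //.
rewrite /mn; case: ifP => hh; rewrite ?subrr ?normr0; have := ep_ge0 R n; lra.
Qed.

End Phi.

Section Phi2.
Variable R : realType.
Variable a : nat -> R.
Variable Ha : forall c, 0 < aa a c <= 2^-1.
Variable Ha1 : aa a 1 = 2^-1.
Variable Ha2 : aa a 2 = 2^-1.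

Lemma KEYe z y t : pw z -> pw y -> 0 <= t <= H a z ->
  mu a (Phi a z t) y = mn t (mu a z y).
Proof.
move=> Hz Hy Ht; apply: (@approx_eq _ _ _ 1) => n; rewrite mul1r.
exact: KEY.
Qed.

Lemma Phi_letters (P : nat -> Prop) z t : P 1%N -> P 2%N -> (forall k, P (z k)) ->
  forall k, P (Phi a z t k).
Proof.
move=> P1 P2 Pz k.
have Hs : forall j, forall i, P ((iter j (nxt a) (z, t)).1 i).
  elim=> [|j IH] //= i; rewrite /nxt; case: ifP => _ /=; first exact: IH.
  by case: ifP => _ /=; [|exact: IH].
rewrite /Phi /letter; case: ifP => _ //; case: ifP => _ //.
Qed.

End Phi2.

End PartHf.
Import PartHf.

Module PartJ.
Import Order.TTheory GRing.Theory Num.Theory.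
Local Open Scope ring_scope.
Local Open Scope classical_set_scope.

Lemma ep_mono (R : realType) m n : (m <= n)%N -> ep R n <= ep R m.
Proof.
move=> mn; rewrite -(subnKC mn); elim: (n - m)%N => [|k IH]; first by rewrite addn0.
rewrite addnS epS; have := ep_ge0 R (m + k); lra.
Qed.

Lemma edge_form M n p q : edgeE M n p q -> exists r i k,
  [/\ inA M i, i <> 1%N, word M r &
   ((p = r ++ 1%N :: nseq k 2%N /\ q = r ++ i :: nseq k 1%N) \/
    (p = r ++ i :: nseq k 1%N /\ q = r ++ 1%N :: nseq k 2%N))].
Proof.
elim=> {n p q}.
- by move=> i Hi Hi1; exists [::], i, 0%N; split => //; left.
- by move=> i Hi Hi1; exists [::], i, 0%N; split => //; right.
- by move=> k i Hi Hi1; exists [::], i, k; split => //; left.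
- by move=> k i Hi Hi1; exists [::], i, k; split => //; right.
move=> k i w u Hi _ [r [j [l [Hj Hj1 Hr [[-> ->]|[-> ->]]]]]].
  by exists (i :: r), j, l; split => //; [apply/word_cons|left].
by exists (i :: r), j, l; split => //; [apply/word_cons|right].
Qed.

Section Lower.
Variable R : realType.
Variable M : option nat.
Variable a : nat -> R.
Variable in2 : inA M 2.
Variable Hw : is_weight a.
Variable F : (nat -> nat) -> R.
Hypothesis FA : forall v x x', word M v -> cyl M v x -> cyl M v x' ->
  `|F x - F x'| <= Delta a v.
Hypothesis FB : forall r i, word M r -> inA M i -> i <> 1%N ->
  F (app_w r (cons_w 1 tw)) = F (app_w r (cons_w i o)).

Lemma cyl_glue1 r k : word M r -> cyl M (r ++ 1%N :: nseq k 2%N) (app_w r (cons_w 1 tw)).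
Proof.
move=> Hr; have i1 := in1 in2; split.
  by apply: infword_app => //; apply: infword_cons => //; exact: infword_cst.
by rewrite size_cat /= size_nseq prefix_app prefix_cons prefix_cst.
Qed.

Lemma cyl_glue2 r k i : word M r -> inA M i -> cyl M (r ++ i :: nseq k 1%N) (app_w r (cons_w i o)).
Proof.
move=> Hr Hi; have i1 := in1 in2; split.
  by apply: infword_app => //; apply: infword_cons => //; exact: infword_cst.
by rewrite size_cat /= size_nseq prefix_app prefix_cons prefix_cst.
Qed.

Lemma FB' n p q : edgeE M n p q -> exists x y, [/\ cyl M p x, cyl M q y & F x = F y].
Proof.
move=> /edge_form [r [i [k [Hi Hi1 Hr [[-> ->]|[-> ->]]]]]].
  exists (app_w r (cons_w 1 tw)), (app_w r (cons_w i o)); split.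
  - exact: cyl_glue1. - exact: cyl_glue2. - exact: FB.
exists (app_w r (cons_w i o)), (app_w r (cons_w 1 tw)); split.
- exact: cyl_glue2. - exact: cyl_glue1. - by rewrite (FB Hr Hi Hi1).
Qed.

Lemma near_half v1 v2 x e : wedge_half M v1 v2 x -> 0 < e ->
  exists y, cyl M v2 y /\ `|F x - F y| <= e.
Proof.
move=> [Hx Hn] e0.
have [n0 Hn0] := ep_small e0.
set n := (maxn (maxn (size v1) (size v2)) n0).+1.
have hn : (maxn (size v1) (size v2) < n)%N by rewrite /n; lia.
have [u [Hu1 [Hu2 [Hu3 Hu4]]]] := Hn n hn.
have [x1 [y1 [C1 C2 E]]] := FB' Hu4.
have Hxi : infword M x by case: Hx.
exists y1; split.
  by apply: (@cyl_take _ v2 u) => //; rewrite Hu1.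
have := FA (word_prefix (n:=n) Hxi) (cyl_prefix n Hxi) C1.
have := Delta_pref Hw n Hxi.
have : ep R n <= ep R n0 by apply: ep_mono; rewrite /n; lia.
rewrite E; lra.
Qed.

Lemma chain_lower_aux vs w w' e : chain M vs w w' -> 0 < e ->
  `|F w - F w'| <= cost a vs + (size vs)%:R * e.
Proof.
move=> + e0; elim: vs w => [|v vs IH] w; first by move/chain_ne.
case: vs IH => [|v2 vs] IH.
  move=> /chain1E [Hv H1 H2]; rewrite /cost big_cons big_nil addr0 /=.
  have := FA Hv H1 H2; have : 0 <= 1%:R * e by rewrite mul1r ltW.
  lra.
move=> Hc; have [Hv Hcw [x [Hx|Hx]] Hr] := chain_consE Hc (@cons_ne _ _ _).
  have [y [Hy Hxy]] := near_half Hx e0.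
  have := IH _ (Hr _ Hy); have := FA Hv Hcw (proj1 Hx).
  rewrite /cost !big_cons.
  rewrite (_ : (size [:: v, v2 & vs])%:R = (size (v2 :: vs))%:R + 1); last by rewrite -natr1.
  move: Hxy; rewrite !ler_norml; lra.
have [y [Hy Hxy]] := near_half Hx e0.
have := IH _ (Hr _ (proj1 Hx)); have := FA Hv Hcw Hy.
rewrite /cost !big_cons.
rewrite (_ : (size [:: v, v2 & vs])%:R = (size (v2 :: vs))%:R + 1); last by rewrite -natr1.
move: Hxy; rewrite !ler_norml; lra.
Qed.

Lemma chain_lower vs w w' : chain M vs w w' -> `|F w - F w'| <= cost a vs.
Proof.
move=> Hc; apply/ler_addgt0Pr => e e0.
set N : R := (size vs).+1%:R.
have N0 : 0 < N by rewrite /N ltr0n.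
have := chain_lower_aux Hc (divr_gt0 e0 N0).
have : (size vs)%:R * (e / N) <= e.
  rewrite mulrA ler_pdivrMr // /N -natr1.
  have := ler0n R (size vs); nra.
set q := (size vs)%:R * (e / N); lra.
Qed.

Lemma rho_lower w w' : infword M w -> infword M w' -> `|F w - F w'| <= rho M a w w'.
Proof. by move=> H1 H2; apply: rho_ge => // vs; apply: chain_lower. Qed.

End Lower.

End PartJ.
Import PartJ.

Module PartK.
Import Order.TTheory GRing.Theory Num.Theory.
Local Open Scope ring_scope.
Local Open Scope classical_set_scope.

Section Main.
Variable R : realType.
Variable M : option nat.
Variable a : nat -> R.
Variable in2 : inA M 2.
Variable Hw : is_weight a.

Local Notation rho := (rho M a).
Local Notation mu := (mu a).
Local Notation H := (H a).
Local Notation K := (K a).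
Local Notation Dd := (Dd a).
Local Notation aa := (aa a).

Lemma aaE c : (1 <= c)%N -> aa c = a c.
Proof. by rewrite /E.aa => ->. Qed.

Lemma Ha c : 0 < aa c <= 2^-1.
Proof.
rewrite /E.aa; case: ifP => h; last by rewrite invr_gt0 ltr0n lexx.
by have [h1 h2] := a_bnd Hw h; rewrite h1 h2.
Qed.

Lemma Ha1 : aa 1 = 2^-1.
Proof. by rewrite aaE // a1. Qed.

Lemma Ha2 : aa 2 = 2^-1.
Proof. by rewrite aaE // a2. Qed.

Lemma i1 : inA M 1.
Proof. exact: in1. Qed.

Lemma iw_pw x : infword M x -> pw x.
Proof. by move=> Hx k; case: (Hx k). Qed.

Lemma word_pwl v : word M v -> pwl v.
Proof. by move=> Hv; apply/allP => c /Hv []. Qed.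

Lemma Delta_Da v : word M v -> Delta a v = Da a v.
Proof.
elim: v => [|c v IH]; first by rewrite Delta_nil /Da big_nil.
move=> /word_cons [Hc Hv]; rewrite Delta_cons Da_cons IH // aaE //; exact: inA_ge1 Hc.
Qed.

Lemma rho_lowerD x y : infword M x -> infword M y -> Dd x y <= rho x y.
Proof.
move=> Hx Hy.
have FA : forall v z z', word M v -> cyl M v z -> cyl M v z' ->
    `|Dd z y - Dd z' y| <= Delta a v.
  move=> v z z' Hv [Hz Pz] [Hz' Pz']; rewrite Delta_Da //.
  apply: (Dd_osc Ha Ha1 Ha2 _ _ _ _ Pz Pz'); try exact: iw_pw.
  exact: word_pwl.
have FB : forall r i, word M r -> inA M i -> i <> 1%N ->
    Dd (app_w r (cons_w 1 tw)) y = Dd (app_w r (cons_w i o)) y.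
  move=> r i Hr Hi Hi1.
  have i2 : (2 <= i)%N by case: Hi => h _; lia.
  exact: (Dd_glue Ha Ha1 Ha2 (word_pwl Hr) i2 (iw_pw Hy)).
have := rho_lower in2 Hw FA FB Hx Hy; rewrite Dd_xx subr0.
have Hd := Dd_ge0 Ha Ha1 (iw_pw Hx) (iw_pw Hy).
by rewrite ger0_norm.
Qed.

Lemma io : infword M o. Proof. exact: infword_cst i1. Qed.
Lemma itw : infword M tw. Proof. exact: infword_cst. Qed.
Lemma ic c x : inA M c -> infword M x -> infword M (cons_w c x).
Proof. exact: infword_cons. Qed.

Lemma tri x y z : infword M x -> infword M y -> infword M z -> rho x z <= rho x y + rho y z.
Proof. exact: rho_tri. Qed.

Lemma r1tw_o : rho (cons_w 1 tw) o <= 2^-1.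
Proof.
rewrite -(a1 Hw) -[a 1]mulr1 -(@Delta_nil R a) -Delta_cons; apply: (rho_cyl Hw).
- by apply/word_cons; split => //; exact: i1.
- by apply: cyl_cons_w; [exact: i1|apply: cyl_nil; exact: itw].
- by rewrite -cst_cons; apply: cyl_cons_w; [exact: i1|apply: cyl_nil; exact: io].
Qed.

Lemma r2o_tw : rho (cons_w 2 o) tw <= 2^-1.
Proof.
rewrite -(a2 Hw) -[a 2]mulr1 -(@Delta_nil R a) -Delta_cons; apply: (rho_cyl Hw).
- by apply/word_cons; split => //.
- by apply: cyl_cons_w => //; apply: cyl_nil; exact: io.
- by rewrite -cst_cons; apply: cyl_cons_w => //; apply: cyl_nil; exact: itw.
Qed.

Lemma rco_1tw c : inA M c -> c <> 1%N -> rho (cons_w c o) (cons_w 1 tw) = 0.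
Proof. exact: rho_glue'. Qed.

Lemma r1tw_co c : inA M c -> c <> 1%N -> rho (cons_w 1 tw) (cons_w c o) = 0.
Proof. exact: rho_glue. Qed.

Lemma r1tw_tw : rho (cons_w 1 tw) tw <= 2^-1.
Proof.
have := tri (y := cons_w 2 o) (ic i1 itw) (ic in2 io) itw.
by rewrite r1tw_co //; have := r2o_tw; lra.
Qed.

Lemma rco_o c : inA M c -> c <> 1%N -> rho (cons_w c o) o <= 2^-1.
Proof.
move=> Hc Hc1; have := tri (y := cons_w 1 tw) (ic Hc io) (ic i1 itw) io.
by rewrite rco_1tw //; have := r1tw_o; lra.
Qed.

Lemma rco_tw c : inA M c -> c <> 1%N -> rho (cons_w c o) tw <= 2^-1.
Proof.
move=> Hc Hc1; have := tri (y := cons_w 1 tw) (ic Hc io) (ic i1 itw) itw.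
by rewrite rco_1tw //; have := r1tw_tw; lra.
Qed.

Lemma rcons c x y : inA M c -> infword M x -> infword M y ->
  rho (cons_w c x) (cons_w c y) <= aa c * rho x y.
Proof. by move=> Hc Hx Hy; rewrite aaE; [exact: rho_cons|exact: inA_ge1 Hc]. Qed.

Lemma U1 n x : infword M x -> rho x o <= H x + ep R n.
Proof.
elim: n x => [|n IH] x Hx.
  by rewrite ep0; have := rho_le1 Hw Hx io; have := H_bnd Ha x; lra.
rewrite -(cons_sh x); move: (Hx 0%N) (infword_sh Hx); move: (x 0%N) (sh x) => c x1 hc hx1.
rewrite H_cons ?epS; last exact: Ha.
have [h1 h2] := andP (Ha c).
have := ep_ge0 R n; have := IH _ hx1; have := rho_ge0 M Hw x1 o.
case: (eqVneq c 1) => [->|c1].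
  have := rcons i1 hx1 io; rewrite cst_cons Ha1 /=; lra.
have c2 : (2 <= c)%N by case: hc => h _; lia.
have := tri (y := cons_w c o) (ic hc hx1) (ic hc io) io.
have := rco_o hc (elimN eqP c1); have := rcons hc hx1 io; rewrite c2.
nra.
Qed.

Lemma U2 n x : infword M x -> rho x tw <= K x + ep R n.
Proof.
elim: n x => [|n IH] x Hx.
  by rewrite ep0; have := rho_le1 Hw Hx itw; have := K_bnd Ha Ha1 Ha2 (iw_pw Hx); lra.
rewrite -(cons_sh x); move: (Hx 0%N) (infword_sh Hx); move: (x 0%N) (sh x) => c x1 hc hx1.
rewrite epS.
have [h1 h2] := andP (Ha c).
have := ep_ge0 R n; have := IH _ hx1; have := rho_ge0 M Hw x1 tw.
case: (eqVneq c 2) => [->|c2].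
  rewrite K_cons2; try exact: Ha; try exact: Ha2.
  have := rcons in2 hx1 itw; rewrite cst_cons Ha2; lra.
case: (eqVneq c 1) => [->|c1].
  rewrite K_cons1; try exact: Ha; try exact: Ha1; try exact: Ha2.
  have := tri (y := cons_w 1 tw) (ic i1 hx1) (ic i1 itw) itw.
  have := rcons i1 hx1 itw; rewrite Ha1; have := r1tw_tw; lra.
have c3 : (3 <= c)%N by case: hc => h _; move: c1 c2 => /eqP c1 /eqP c2; lia.
rewrite K_cons3 //; try exact: Ha; try exact: Ha1; try exact: Ha2.
have := tri (y := cons_w c o) (ic hc hx1) (ic hc io) itw.
have := rcons hc hx1 io; have := rco_tw hc (elimN eqP c1).
have := U1 n hx1; have := rho_ge0 M Hw x1 o.
nra.
Qed.

Lemma L1d n x1 y1 d : inA M d -> (2 <= d)%N -> infword M x1 -> infword M y1 ->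
  rho (cons_w 1 x1) (cons_w d y1) <= Dd (cons_w 1 x1) (cons_w d y1) + ep R n.
Proof.
move=> hd d2 hx1 hy1.
have d1 : d <> 1%N by lia.
rewrite Dd_1d //; try exact: Ha; try exact: Ha1; try exact: Ha2.
have [h1 h2] := andP (Ha d).
have t1 := tri (y := cons_w 1 tw) (ic i1 hx1) (ic i1 itw) (ic hd hy1).
have t2 := tri (y := cons_w d o) (ic i1 itw) (ic hd io) (ic hd hy1).
have := rcons i1 hx1 itw; rewrite Ha1.
have := rcons hd io hy1; rewrite (rho_sym in2 Hw io hy1).
rewrite r1tw_co // in t2.
have := U1 n hy1; have := U2 n hx1; have := rho_ge0 M Hw y1 o; have := ep_ge0 R n.
nra.
Qed.

Lemma U n x y : infword M x -> infword M y -> rho x y <= Dd x y + 2 * ep R n.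
Proof.
elim: n x y => [|n IH] x y Hx Hy.
  rewrite ep0; have := rho_le1 Hw Hx Hy; have := Dd_ge0 Ha Ha1 (iw_pw Hx) (iw_pw Hy); lra.
rewrite -(cons_sh x) -(cons_sh y).
move: (Hx 0%N) (infword_sh Hx) (Hy 0%N) (infword_sh Hy).
move: (x 0%N) (sh x) (y 0%N) (sh y) => c x1 d y1 hc hx1 hd hy1 {Hx Hy x y}.
rewrite epS.
have [h1 h2] := andP (Ha c); have [h3 h4] := andP (Ha d).
have he := ep_ge0 R n.
case: (eqVneq c d) => [<-|cd].
  rewrite Dd_cc; last exact: Ha.
  have := rcons hc hx1 hy1; have := IH _ _ hx1 hy1; have := rho_ge0 M Hw x1 y1.
  nra.
have c1' : (1 <= c)%N by case: hc.
have d1' : (1 <= d)%N by case: hd.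
case: (eqVneq c 1) => [c1|c1].
  subst c; have d2 : (2 <= d)%N by move: cd; lia.
  have := L1d n hd d2 hx1 hy1; lra.
case: (eqVneq d 1) => [d1|d1].
  subst d; have c2 : (2 <= c)%N by move: c1; lia.
  rewrite (rho_sym in2 Hw (ic hc hx1) (ic i1 hy1)) Dd_sym; try exact: Ha.
  have := L1d n hc c2 hy1 hx1; lra.
have c2 : (2 <= c)%N by move: c1; lia.
have d2 : (2 <= d)%N by move: d1; lia.
have cd' : c <> d by apply/eqP.
rewrite Dd_cross2 //; try exact: Ha; try exact: Ha1; try exact: Ha2.
have t1 := tri (y := cons_w c o) (ic hc hx1) (ic hc io) (ic hd hy1).
have t2 := tri (y := cons_w 1 tw) (ic hc io) (ic i1 itw) (ic hd hy1).
have t3 := tri (y := cons_w d o) (ic i1 itw) (ic hd io) (ic hd hy1).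
rewrite rco_1tw // in t2; last by apply/eqP.
rewrite r1tw_co // in t3; last by apply/eqP.
have := rcons hc hx1 io; have := rcons hd io hy1; rewrite (rho_sym in2 Hw io hy1).
have := U1 n hy1; have := U1 n hx1; have := rho_ge0 M Hw y1 o; have := rho_ge0 M Hw x1 o.
nra.
Qed.

Lemma rho_eq x y : infword M x -> infword M y -> rho x y = Dd x y.
Proof.
move=> Hx Hy; apply/eqP; rewrite eq_le rho_lowerD // andbT.
by apply: (@approx_le _ _ _ 2) => n; apply: U.
Qed.

End Main.

End PartK.
Import PartK.

Module PartL.
Import Order.TTheory GRing.Theory Num.Theory.
Local Open Scope ring_scope.

Section Final.
Variable R : realType.
Variable M : option nat.
Variable a : nat -> R.
Variable in2 : inA M 2.
Variable Hw : is_weight a.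

Local Notation rho := (rho M a).
Local Notation mu := (mu a).
Local Notation H := (H a).
Local Notation Dd := (Dd a).
Local Notation Phi := (Phi a).

Let Ha' := Ha Hw.
Let Ha1' := Ha1 Hw.
Let Ha2' := Ha2 Hw.

Lemma mn_l (s t : R) : s <= t -> mn s t = s.
Proof. by rewrite /mn => ->. Qed.
Lemma mn_r (s t : R) : t <= s -> mn s t = t.
Proof. by rewrite /mn; case: ifP => // h1 h2; apply/eqP; rewrite eq_le h1 h2. Qed.

Lemma Phi_iw z t : infword M z -> infword M (Phi z t).
Proof. by move=> Hz k; apply: (@Phi_letters R a (inA M) z t) => //; exact: i1. Qed.

Lemma Phi_pw z t : pw z -> pw (Phi z t).
Proof. by move=> Hz k; apply: (@Phi_letters R a (fun c => (1 <= c)%N) z t). Qed.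

Lemma H_Phi z t : pw z -> 0 <= t <= H z -> H (Phi z t) = t.
Proof.
move=> Hz Ht; have Hp := Phi_pw t Hz.
rewrite /E.H (KEYe Ha' Ha1' Ha2') // mu_sym // (KEYe Ha' Ha1' Ha2') //.
case/andP: Ht => _ Ht; have -> : mu z z = H z by [].
by rewrite (mn_l Ht) mn_l.
Qed.

Lemma mu_PhiPhi z s t : pw z -> 0 <= s <= H z -> 0 <= t <= H z ->
  mu (Phi z s) (Phi z t) = mn s t.
Proof.
move=> Hz Hs Ht; have Hp := Phi_pw t Hz.
rewrite (KEYe Ha' Ha1' Ha2') // mu_sym // (KEYe Ha' Ha1' Ha2') //.
by case/andP: Ht => _ Ht; have -> : mu z z = H z by []; rewrite (mn_l Ht).
Qed.

Lemma mu_PhiPhi' z y s t : pw z -> pw y -> 0 <= s <= H z -> 0 <= t <= H y ->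
  mu (Phi z s) (Phi y t) = mn s (mn t (mu y z)).
Proof.
move=> Hz Hy Hs Ht; have Hp := Phi_pw t Hy.
by rewrite (KEYe Ha' Ha1' Ha2') // mu_sym // (KEYe Ha' Ha1' Ha2').
Qed.

Lemma Dd_PhiPhi z s t : pw z -> 0 <= s <= H z -> 0 <= t <= H z ->
  Dd (Phi z s) (Phi z t) = `|s - t|.
Proof.
move=> Hz Hs Ht; rewrite /E.Dd mu_PhiPhi // !H_Phi //.
rewrite /mn; case: ifP => h.
  by rewrite ler0_norm ?subr_le0 //; lra.
by rewrite ger0_norm; [lra|move/negbT: h; rewrite -ltNge subr_ge0 => /ltW].
Qed.

Lemma mu_Phi_self z t : pw z -> 0 <= t <= H z -> mu (Phi z t) z = t.
Proof.
move=> Hz Ht; rewrite (KEYe Ha' Ha1' Ha2') //.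
by case/andP: Ht => _ Ht; have -> : mu z z = H z by []; rewrite (mn_l Ht).
Qed.

Theorem main w u : infword M w -> infword M u ->
  exists g : R -> nat -> nat,
    (forall t, 0 <= t <= rho w u -> infword M (g t)) /\
    rho (g 0) w = 0 /\
    rho (g (rho w u)) u = 0 /\
    (forall s t, 0 <= s <= rho w u -> 0 <= t <= rho w u ->
       rho (g s) (g t) = `|s - t|).
Proof.
move=> Hwi Hui.
have pww := iw_pw Hwi; have pwu := iw_pw Hui.
have hw : mu w u <= H w by apply: mu_le_H.
have hu : mu w u <= H u by rewrite mu_sym //; apply: mu_le_H.
have h0 : 0 <= mu w u by case/andP: (mu_bnd Ha' w u).
have huw : mu u w = mu w u by rewrite mu_sym.
move: hw hu h0 huw; set h := mu w u; set Hw_ := H w; set Hu := H u => hw hu h0 huw.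
have Ed : rho w u = Hw_ + Hu - 2 * h by rewrite rho_eq.
pose g t := if t <= Hw_ - h then Phi w (Hw_ - t) else Phi u (t - Hw_ + 2 * h).
have gi : forall t, infword M (g t).
  by move=> t; rewrite /g; case: ifP => _; apply: Phi_iw.
exists g; split; first by move=> t _; apply: gi.
rewrite Ed; split.
  rewrite rho_eq //; rewrite /g; have -> : (0 <= Hw_ - h) = true by apply/idP; lra.
  have Ht : 0 <= Hw_ - 0 <= H w by apply/andP; rewrite -/Hw_; lra.
  rewrite /E.Dd H_Phi // mu_Phi_self // -/Hw_; lra.
split.
  rewrite rho_eq //; rewrite /g; case: ifP => hb.
    have Ht : 0 <= Hw_ - (Hw_ + Hu - 2 * h) <= H w by apply/andP; rewrite -/Hw_; lra.
    rewrite /E.Dd H_Phi // (KEYe Ha' Ha1' Ha2') // -/Hu -/h.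
    rewrite /mn; case: ifP => _; lra.
  have Ht : 0 <= Hw_ + Hu - 2 * h - Hw_ + 2 * h <= H u.
    by apply/andP; rewrite -/Hu; lra.
  rewrite /E.Dd H_Phi // mu_Phi_self // -/Hu; lra.
move=> s t Hs Ht; rewrite (rho_eq in2 Hw (gi s) (gi t)).
have key : forall s t, 0 <= s <= Hw_ + Hu - 2 * h -> 0 <= t <= Hw_ + Hu - 2 * h ->
    s <= Hw_ - h -> Dd (g s) (g t) = `|s - t|.
  move=> s' t' Hs' Ht' hs.
  rewrite /g hs.
  have Hs1 : 0 <= Hw_ - s' <= H w by apply/andP; rewrite -/Hw_; lra.
  case: ifP => ht.
    have Ht1 : 0 <= Hw_ - t' <= H w by apply/andP; rewrite -/Hw_; lra.
    rewrite Dd_PhiPhi //; rewrite distrC; congr `|_|; lra.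
  have Ht1 : 0 <= t' - Hw_ + 2 * h <= H u.
    by apply/andP; rewrite -/Hu; move/negbT: ht; rewrite -ltNge => ht; lra.
  move/negbT: ht; rewrite -ltNge => ht.
  rewrite /E.Dd !H_Phi // (mu_PhiPhi' pww pwu) // huw.
  rewrite (mn_r (_ : h <= t' - Hw_ + 2 * h)); last lra.
  rewrite (mn_r (_ : h <= Hw_ - s')); last lra.
  rewrite ler0_norm; lra.
case: (lerP s (Hw_ - h)) => hs; first exact: key.
case: (lerP t (Hw_ - h)) => ht.
  by rewrite Dd_sym // distrC; apply: key.
rewrite /g; have -> : (s <= Hw_ - h) = false by apply/negbTE; rewrite -ltNge.
have -> : (t <= Hw_ - h) = false by apply/negbTE; rewrite -ltNge.
have Hs1 : 0 <= s - Hw_ + 2 * h <= H u by apply/andP; rewrite -/Hu; lra.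
have Ht1 : 0 <= t - Hw_ + 2 * h <= H u by apply/andP; rewrite -/Hu; lra.
rewrite Dd_PhiPhi //; congr `|_|; lra.
Qed.

End Final.

End PartL.
Import PartL.

Lemma in2_of (M : option nat) : (forall m, M = Some m -> (2 <= m)%N) -> inA M 2.
Proof. by case: M => [m|] HM; split => //; apply: HM. Qed.

Unset Implicit Arguments.

(* T^{A,a} is geodesic, stated on representatives of the quotient
   (points are classes of infinite words, d([w],[u]) = rho w u). *)
Theorem proposition5p1 (R : realType) (M : option nat) (a : nat -> R) :
  (forall m, M = Some m -> (2 <= m)%N) ->
  is_weight a ->
  forall w u : nat -> nat, infword M w -> infword M u ->
  exists g : R -> nat -> nat,
    (forall t, 0 <= t <= rho M a w u -> infword M (g t)) /\
    rho M a (g 0) w = 0 /\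
    rho M a (g (rho M a w u)) u = 0 /\
    (forall s t, 0 <= s <= rho M a w u -> 0 <= t <= rho M a w u ->
       rho M a (g s) (g t) = `|s - t|).
Proof.
move=> HM Hw w u Hwi Hui.
exact: (main (in2_of HM) Hw Hwi Hui).
Qed.
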